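(* Let $n \geq 2$ and suppose there exists a normalized symmetric conference matrix $C(n)$ of order $n$. Then for each $m \in \{n+1, n+2, n+3\}$, the complete graph $K_m$ has a good signing, i.e. there is an edge-signing $\sigma: E(K_m) \to \{-1,1\}$ such that every eigenvalue $\lambda$ of the signed adjacency matrix $A^{\sigma}$ satisfies $|\lambda| \leq 2\sqrt{m-2}$.
   Context: A conference matrix of order $n$ is an $n\times n$ matrix $C(n)$ with zero diagonal and off-diagonal entries in $\{1,-1\}$ such that $C(n)C(n)^T = (n-1)I$. It is normalized symmetric if it is symmetric and all entries of its first row are non-negative. For a graph $G$ and an edge-signing $\sigma: E(G)\to\{-1,1\}$, the signed adjacency matrix $A^{\sigma}=[a^\sigma_{ij}]$ has $a^{\sigma}_{ij}=\sigma(ij)$ if $ij\in E(G)$ and $0$ otherwise. For a $d$-regular graph $G$, a signing $\sigma$ is called a good signing if all eigenvalues of $A^{\sigma}$ have absolute value at most $2\sqrt{d-1}$; $K_m$ is $(m-1)$-regular. *)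

(* Defs.v *)
From HB Require Import structures.
From mathcomp Require Import all_boot all_order all_algebra.
Set Implicit Arguments. Unset Strict Implicit. Unset Printing Implicit Defensive.
Import Order.TTheory GRing.Theory Num.Theory.
Local Open Scope ring_scope.

Definition conference_matrix (R : numDomainType) (n : nat) (C : 'M[R]_n) : Prop :=
  [/\ (forall i, C i i = 0),
      (forall i j, i != j -> C i j = 1 \/ C i j = -1)
    & C *m C^T = (n.-1)%:R%:M].

Definition normalized_symmetric_conference (R : numDomainType) (n : nat)
    (C : 'M[R]_n) : Prop :=
  [/\ conference_matrix C, C^T = C
    & forall i j : 'I_n, nat_of_ord i = 0%N -> 0 <= C i j].

Definition Km_signing (m : nat) (sigma : {set 'I_m} -> int) : Prop :=
  forall e : {set 'I_m}, #|e| = 2%N -> sigma e = 1%Z \/ sigma e = (-1)%Z.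

Definition Km_signed_adj (R : pzRingType) (m : nat) (sigma : {set 'I_m} -> int)
    : 'M[R]_m :=
  \matrix_(i, j) (if i == j then 0 else (sigma [set i; j])%:~R).

(* Good signing of the d-regular graph K_m (d = m - 1): every eigenvalue of
   the signed adjacency matrix has absolute value at most 2 sqrt(d - 1).
   The matrix is real symmetric, so all its eigenvalues are real; we
   quantify over eigenvalues in the real closed field R. *)
Definition Km_good_signing (R : rcfType) (m : nat) (sigma : {set 'I_m} -> int)
    : Prop :=
  Km_signing sigma /\
  forall lambda : R, eigenvalue (Km_signed_adj R sigma) lambda ->
    `|lambda| <= 2 * Num.sqrt ((m.-1)%:R - 1).

(* Main.v *)
Require Import Defs.
From HB Require Import structures.
From mathcomp Require Import all_boot all_order all_algebra.
From mathcomp Require Import ring lra zify.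
Import Order.TTheory GRing.Theory Num.Theory.
Local Open Scope ring_scope.

Lemma cub1 (R : rcfType) (n l : R) : 2 <= n ->
  (l^+2 - (n-1)) * l = (n * l + 2*n - 2) -> l^+2 <= 4 * (n - 1).
Proof. move=> hn h. rewrite leNgt; apply/negP => hl.
have hu : l * (l^+2 - (2*n-1)) = 2*(n-1) by lra.
have [lpos|lneg] := ltP 0 l; last by nra.
have h1 : l^+2 * (l^+2 - (2*n-1))^+2 = 4*(n-1)^+2.
  have e : l^+2 * (l^+2 - (2*n-1))^+2 = (l * (l^+2 - (2*n-1)))^+2 by ring.
  by rewrite e hu; ring.
have h2 : 2*n-3 < l^+2 - (2*n-1) by lra.
have h3: (2*n-3)^+2 <= (l^+2 - (2*n-1))^+2 by nra.
nra.
Qed.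
Lemma cub2 (R : rcfType) (n l : R) : 2 <= n ->
  (l^+2 - (n-1)) * (l+1) = 2*(n * l + 2*n - 2) -> l^+2 <= 4 * n.
Proof. move=> hn h. rewrite leNgt; apply/negP => hl.
have [lpos|lneg] := ltP 0 l.
  have l1 : 1 < l by nra.
  nra.
have ha : 0 < l^+2 + l - 3*n + 1 by nra.
nra.
Qed.
Lemma cub3 (R : rcfType) (n l : R) : 2 <= n ->
  (l^+2 - (n-1)) * (l+2) = 3*(n * l + 2*n - 2) -> l^+2 <= 4 * (n+1).
Proof. move=> hn h. rewrite leNgt; apply/negP => hl.
have [lpos|lneg] := ltP 0 l.
  have l1 : 1 < l by nra.
  nra.
have l1 : l < -(16/5) by nra.
have hp : 0 <= (-l-2)*(l^+2-4*n-4) by nra.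
nra.
Qed.

Lemma signing_of (R : rcfType) m (A : 'M[R]_m) : (forall i, A i i = 0) -> A^T = A ->
  (forall i j, i != j -> A i j = 1 \/ A i j = -1) ->
  exists sigma, Km_signing sigma /\ Km_signed_adj R sigma = A.
Proof.
move=> hd hT hpm.
pose f (i j : 'I_m) : int := if 0 <= A i j then 1%Z else (-1)%Z.
pose sigma (e : {set 'I_m}) : int :=
  if [pick p : 'I_m * 'I_m | e == [set p.1; p.2]] is Some p then f p.1 p.2 else 1%Z.
exists sigma; split.
  move=> e _; rewrite /sigma; case: pickP => [p _|_]; last by left.
  by rewrite /f; case: ifP; [left|right].
apply/matrixP => i j; rewrite mxE; case: eqVneq => [->|hij]; first by rewrite hd.
rewrite /sigma; case: pickP => [[a b] /= /eqP he | hn]; last first.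
  by have := hn (i, j); rewrite eqxx.
have hsym : forall u v, A u v = A v u.
  by move=> u v; rewrite -[in LHS]hT mxE.
suff hab : A a b = A i j.
  rewrite /f hab.
  by case: (hpm i j hij) => ->; rewrite ?ler01 ?lerN10 //= ?ler0N1.
have ha : a \in [set i; j] by rewrite he set21.
have hb : b \in [set i; j] by rewrite he set22.
have hi : i \in [set a; b] by rewrite -he set21.
have hj : j \in [set a; b] by rewrite -he set22.
move: hi hj; case/set2P: ha => ->; case/set2P: hb => -> // hi hj.
all: first [by rewrite hsym | by case/set2P: hj => e; rewrite e eqxx in hij
  | by case/set2P: hi => e; rewrite e eqxx in hij].
Qed.

Definition A0 {R : rcfType} {n} k (C : 'M[R]_n) : 'M[R]_(n + k) :=
  block_mx C (const_mx 1) (const_mx 1) (1%:M - const_mx 1).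

Lemma A0_props (R : rcfType) n k (C : 'M[R]_n) :
  (forall i, C i i = 0) -> C^T = C -> (forall i j, i != j -> C i j = 1 \/ C i j = -1) ->
  [/\ forall i, A0 k C i i = 0, (A0 k C)^T = A0 k C &
      forall i j, i != j -> A0 k C i j = 1 \/ A0 k C i j = -1].
Proof.
move=> hd hT hpm; split.
- move=> i; rewrite /A0 -(splitK i); case: (split i) => a /=.
    by rewrite block_mxEul hd.
  by rewrite block_mxEdr !mxE eqxx subrr.
- by rewrite /A0 tr_block_mx hT !trmx_const linearB /= trmx1 trmx_const.
- move=> i j; rewrite /A0 -(splitK i) -(splitK j).
  case: (split i) => a; case: (split j) => b /= hab.
  + by rewrite block_mxEul; apply: hpm; apply: contraNneq hab => ->.
  + by rewrite block_mxEur mxE; left.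
  + by rewrite block_mxEdl mxE; left.
  + rewrite block_mxEdr !mxE; right.
    have -> : (a == b) = false by apply/negbTE; apply: contraNneq hab => ->.
    by rewrite /= ?mulr0n ?subr0 sub0r.
Qed.

Lemma sum_but (R : rcfType) n (f : 'I_n -> R) i0 :
  \sum_j f j * (j != i0)%:R = \sum_j f j - f i0.
Proof.
rewrite [X in _ = X - _](bigD1 i0) //= addrC addrK (bigD1 i0) //= eqxx mulr0 add0r.
by apply: eq_bigr => j ->; rewrite mulr1.
Qed.

Lemma sum_at (R : rcfType) n (f : 'I_n -> R) i0 :
  \sum_j f j * (j == i0)%:R = f i0.
Proof.
rewrite (bigD1 i0) //= eqxx mulr1 big1 ?addr0 //.
by move=> j /negbTE ->; rewrite mulr0.
Qed.

Lemma mul_const1 (R : rcfType) p q (u : 'rV[R]_p) j :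
  (u *m (const_mx 1 : 'M_(p, q))) 0 j = \sum_i u 0 i.
Proof. by rewrite mxE; apply: eq_bigr => i _; rewrite mxE mulr1. Qed.

Lemma eig_cases (R : rcfType) (n k : nat) (C : 'M[R]_n) (i0 : 'I_n) :
  (0 < k)%N -> (forall i, C i i = 0) -> C^T = C -> C *m C^T = (n.-1)%:R%:M ->
  (forall j, j != i0 -> C i0 j = 1) ->
  forall l, eigenvalue (A0 k C) l ->
  [\/ l = 1, l^+2 = (n.-1)%:R |
     (l^+2 - (n.-1)%:R) * (l + k%:R - 1) = k%:R * ((n.-1)%:R * l + l + 2 * (n.-1)%:R)].
Proof.
move=> hk hd hs hcc h0 l /eigenvalueP [x hx xn0].
rewrite -(hsubmxK x) /A0 mul_row_block scale_row_mx in hx.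
case/eq_row_mx: hx => e1 e2.
set y := lsubmx x in e1 e2 xn0 *; set z := rsubmx x in e1 e2 xn0 *.
set Y := \sum_i y 0 i; set S := \sum_q z 0 q; set y0 := y 0 i0.
have hC0 : forall j, C i0 j = (j != i0)%:R.
  by move=> j; case: eqVneq => [->|h]; [rewrite hd | rewrite h0].
have hCi : forall i, C i i0 = (i != i0)%:R.
  by move=> i; rewrite -hs mxE hC0.
have hrow : forall i, \sum_j C i j = (n.-1)%:R * (i == i0)%:R + (i != i0)%:R.
  move=> i; have := hcc; move/matrixP/(_ i i0); rewrite !mxE => E.
  rewrite (eq_bigr (fun j => C i j * (j != i0)%:R)) in E; last by move=> j _; rewrite mxE hC0.
  rewrite sum_but hCi in E.
  by rewrite -(subrK (i != i0)%:R (\sum_j C i j)) E mulr_natr.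
have E1 : forall j, (y *m C) 0 j + S = l * y 0 j.
  move=> j; have hh : l * y 0 j = (l *: y) 0 j by rewrite [RHS]mxE.
  rewrite hh.
  by rewrite -e1 [in RHS]mxE mul_const1.
have E2 : forall q, Y + (z 0 q - S) = l * z 0 q.
  move=> q; have -> : l * z 0 q = (l *: z) 0 q by rewrite [RHS]mxE.
  by rewrite -e2 [in RHS]mxE (@mul_const1 R n k y q) mulmxBr mulmx1 [in RHS]mxE [X in _ = _ + (_ + X)]mxE (@mul_const1 R k k z q).
have EB : Y - y0 + S = l * y0.
  rewrite -E1 mxE; congr (_ + _).
  by under eq_bigr do rewrite hCi; rewrite sum_but.
have EA : (n.-1)%:R * y0 + (Y - y0) + n%:R * S = l * Y.
  have : \sum_j ((y *m C) 0 j + S) = \sum_j (l * y 0 j) by apply: eq_bigr => j _; exact: E1.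
  rewrite big_split /= sumr_const card_ord -mulr_natl -mulr_sumr => <-.
  congr (_ + _); last by rewrite mulr_natl.
  under eq_bigr do rewrite mxE.
  rewrite exchange_big /=.
  under eq_bigr do rewrite -mulr_sumr hrow mulrDr mulrCA.
  by rewrite big_split /= -mulr_sumr (@sum_at R n (fun i => y 0 i) i0) (@sum_but R n (fun i => y 0 i) i0) mulr1.
have EC : k%:R * Y + S - k%:R * S = l * S.
  have : \sum_q (Y + (z 0 q - S)) = \sum_q (l * z 0 q) by apply: eq_bigr => q _; exact: E2.
  rewrite big_split /= sumr_const card_ord -mulr_natl -mulr_sumr => <-.
  rewrite big_split /= sumr_const card_ord -mulr_natl /=.
  have h1 : Y *+ k = k%:R * Y by rewrite mulr_natl.
  have h2 : S *+ k = k%:R * S by rewrite mulr_natl.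
  rewrite !mulr1 mulNrn h1 h2 -/S; lra.
have n0 : (0 < n)%N by apply: leq_ltn_trans (ltn_ord i0).
have hnN : n%:R = (n.-1)%:R + 1 :> R by rewrite natr1 prednK.
rewrite hnN in EA.
set N := (n.-1)%:R in EA EB EC hnN *.
set K := k%:R in EC *.
have P1 : (l-1)*Y - (N-1)*y0 - (N+1)*S = 0 by lra.
have P2 : (l+1)*y0 - Y - S = 0 by lra.
have P3 : K*Y - (l+K-1)*S = 0 by lra.
have T : S * ((l^+2 - N) * (l + K - 1) - K * (N * l + l + 2 * N)) = 0.
  have -> : S * ((l^+2 - N) * (l + K - 1) - K * (N * l + l + 2 * N)) =
     K*((l+1)*((l-1)*Y - (N-1)*y0 - (N+1)*S) + (N-1)*((l+1)*y0 - Y - S))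
     - (l^+2-N)*(K*Y - (l+K-1)*S) by ring.
  by rewrite P1 P2 P3; ring.
move/eqP: T; rewrite mulf_eq0 => /orP[/eqP S0|]; last by rewrite subr_eq0 => /eqP ->; constructor 3.
have hzJ : z *m (const_mx 1 : 'M_(k, n)) = 0.
  by apply/matrixP => a b; rewrite [a]ord1 (@mul_const1 R k n z b) mxE.
rewrite hzJ addr0 in e1.
have hyy : (l * l - N) *: y = 0.
  have := hcc; move/(congr1 (mulmx y)).
  rewrite hs mulmxA e1 -scalemxAl e1 scalerA mul_mx_scalar => E.
  by rewrite scalerBl E subrr.
move/eqP: hyy; rewrite scaler_eq0 => /orP[|/eqP hy].
  by rewrite subr_eq0 => /eqP h; constructor 2; rewrite expr2.
have Y0 : Y = 0 by rewrite /Y big1 // => i _; rewrite hy mxE.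
have [->|l1] := eqVneq l 1; first by constructor 1.
have hz : z = 0.
  apply/rowP => q; rewrite [RHS]mxE.
  have := E2 q; rewrite Y0 S0 add0r subr0 => /eqP.
  rewrite -subr_eq0 -{1}[z 0 q]mul1r -mulrBl mulf_eq0 => /orP[|/eqP //].
  by rewrite subr_eq0 eq_sym (negbTE l1).
move: xn0; rewrite -(hsubmxK x) -/y -/z hy hz row_mx0 eqxx.
done.
Qed.

Lemma bound_conv (R : rcfType) (l t : R) : 0 <= t -> l^+2 <= 4 * t ->
  `|l| <= 2 * Num.sqrt t.
Proof.
move=> t0 h; rewrite -sqrtr_sqr.
have -> : (2 : R) = Num.sqrt (2^+2) by rewrite sqrtr_sqr ger0_norm.
rewrite -sqrtrM ?exprn_ge0 // ler_sqrt; last by rewrite mulr_ge0 ?exprn_ge0.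
by rewrite (_ : 2^+2 = 4 :> R) //; rewrite expr2; lra.
Qed.

Theorem mainTheorem1 (R : rcfType) (n : nat) (hn : (2 <= n)%N)
  (hC : exists C : 'M[R]_n, normalized_symmetric_conference C) :
  forall m : nat, (n + 1 <= m <= n + 3)%N ->
    exists sigma : {set 'I_m} -> int, Km_good_signing R sigma.
Proof.
move=> m /andP[hm1 hm2].
have [C [[hd hpm hcc] hs hnorm]] := hC.
have n0 : (0 < n)%N by apply: ltnW.
pose i0 : 'I_n := Ordinal n0.
have h0 : forall j, j != i0 -> C i0 j = 1.
  move=> j hj; have := hnorm i0 j erefl.
  have hij : i0 != j by rewrite eq_sym.
  by case: (hpm i0 j hij) => -> //; lra.
have [k [hk ->]] : exists k, (1 <= k <= 3)%N /\ m = (n + k)%N.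
  by exists (m - n)%N; split; [apply/andP; split|]; lia.
have [hAd hAT hApm] := @A0_props R n k C hd hs hpm.
have [sigma [hsig hadj]] := @signing_of R (n + k) (A0 k C) hAd hAT hApm.
exists sigma; split => // l; rewrite hadj => hl.
have k0 : (0 < k)%N by case/andP: hk.
have := @eig_cases R n k C i0 k0 hd hs hcc h0 l hl.
have hpk : (n + k).-1 = (n.-1 + k)%N by rewrite -!subn1 addnBAC.
rewrite hpk natrD.
have N1 : 1 <= (n.-1)%:R :> R by rewrite ler1n -ltnS prednK.
set N := (n.-1)%:R.
move=> hcase; apply: bound_conv.
  have hk1 : 1 <= k%:R :> R by rewrite ler1n.
  lra.
case/andP: hk; case: k {hl hAd hAT hApm sigma hsig hadj hpk k0} hcase => [|[|[|[|k]]]] //= hcase _ _.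
- case: hcase => [->|->|h]; try lra.
  have H := @cub1 R (N + 1) l.
  rewrite (_ : N + 1 - 1 = N + 1 - 1) //.
  apply: H; first lra.
  apply/eqP; rewrite -subr_eq0; move/eqP: h; rewrite -subr_eq0 => /eqP h.
  apply/eqP; rewrite -h; ring.
- case: hcase => [->|->|h]; try lra.
  have H := @cub2 R (N + 1) l.
  rewrite (_ : N + 2 - 1 = N + 1); last by ring.
  apply: H; first lra.
  apply/eqP; rewrite -subr_eq0; move/eqP: h; rewrite -subr_eq0 => /eqP h.
  apply/eqP; rewrite -h; ring.
- case: hcase => [->|->|h]; try lra.
  have H := @cub3 R (N + 1) l.
  rewrite (_ : N + 3 - 1 = N + 1 + 1); last by ring.
  apply: H; first lra.
  apply/eqP; rewrite -subr_eq0; move/eqP: h; rewrite -subr_eq0 => /eqP h.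
  apply/eqP; rewrite -h; ring.
Qed.
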